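(* Let $(X,T)$ be a minimal Cantor system with a sequence of CKR partitions satisfying (KR1)–(KR6), and let $\lambda\in\mathbb C$ with $|\lambda|=1$. (1) If $\lambda$ is a continuous eigenvalue of $(X,T)$, then $\sup_{1\le k\le C(n)}|\lambda^{h_k(n)}-1|\to0$ as $n\to\infty$. (2) If $$\sum_{m\ge1}\frac{\max_{1\le k\le C(m+1)}h_k(m+1)}{\min_{1\le k\le C(m)}h_k(m)}\ \max_{1\le k\le C(m)}|\lambda^{h_k(m)}-1|<\infty,$$ then $\lambda$ is a continuous eigenvalue of $(X,T)$.
   Context: CKR partitions $\mathcal P(n)=\{T^{-j}B_k(n):1\le k\le C(n),0\le j<h_k(n)\}$ (partitions of $X$, $B_k(n)$ clopen) with $\mathcal P(0)$ trivial, roof $B(n)=\bigcup_kB_k(n)$. (KR1) $B(n+1)\subseteq B(n)$; (KR2) $\mathcal P(n+1)$ refines $\mathcal P(n)$; (KR3) $\bigcap_nB(n)$ is a single point; (KR4) the partitions generate the topology; (KR5) for all $n\ge1$, $k\le C(n-1)$, $l\le C(n)$ some $0\le j<h_l(n)$ has $T^{-j}B_l(n)\subseteq B_k(n-1)$; (KR6) $B(n)\subseteq B_1(n-1)$ for $n\ge1$. A continuous eigenvalue is $\lambda$ with $f\circ T=\lambda f$ for some continuous nonzero $f:X\to\mathbb C$. *)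

(* Defs.v *)
From Stdlib Require Import Reals Lra Lia List.
Import ListNotations.
Open Scope R_scope.

Record Cx := mkCx { Cre : R; Cim : R }.
Definition Cx0 : Cx := mkCx 0 0.
Definition Cx1 : Cx := mkCx 1 0.
Definition Cx_add (a b : Cx) : Cx := mkCx (Cre a + Cre b) (Cim a + Cim b).
Definition Cx_sub (a b : Cx) : Cx := mkCx (Cre a - Cre b) (Cim a - Cim b).
Definition Cx_mul (a b : Cx) : Cx :=
  mkCx (Cre a * Cre b - Cim a * Cim b) (Cre a * Cim b + Cim a * Cre b).
Fixpoint Cx_pow (a : Cx) (n : nat) : Cx :=
  match n with O => Cx1 | S m => Cx_mul a (Cx_pow a m) end.
Definition Cx_norm (a : Cx) : R := sqrt (Cre a * Cre a + Cim a * Cim a).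

Definition is_metric {X : Type} (d : X -> X -> R) : Prop :=
  (forall x y, 0 <= d x y) /\ (forall x y, d x y = 0 <-> x = y) /\
  (forall x y, d x y = d y x) /\ (forall x y z, d x z <= d x y + d y z).

Definition is_open {X : Type} (d : X -> X -> R) (U : X -> Prop) : Prop :=
  forall x, U x -> exists eps, eps > 0 /\ forall y, d x y < eps -> U y.
Definition is_closed {X : Type} (d : X -> X -> R) (U : X -> Prop) : Prop :=
  is_open d (fun x => ~ U x).
Definition is_clopen {X : Type} (d : X -> X -> R) (U : X -> Prop) : Prop :=
  is_open d U /\ is_closed d U.

Definition seq_converges {X : Type} (d : X -> X -> R) (u : nat -> X) (l : X) : Prop :=
  forall eps, eps > 0 -> exists N, forall n, (n >= N)%nat -> d (u n) l < eps.

(* compactness of a metric space = sequential compactness *)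
Definition compact_space {X : Type} (d : X -> X -> R) : Prop :=
  forall u : nat -> X, exists (phi : nat -> nat) (l : X),
    (forall n, (phi n < phi (S n))%nat) /\ seq_converges d (fun n => u (phi n)) l.

Definition connected_subset {X : Type} (d : X -> X -> R) (A : X -> Prop) : Prop :=
  ~ exists U V : X -> Prop, is_open d U /\ is_open d V /\
      (forall x, A x -> U x \/ V x) /\ (exists x, A x /\ U x) /\
      (exists x, A x /\ V x) /\ (forall x, A x -> U x -> V x -> False).

Definition totally_disconnected {X : Type} (d : X -> X -> R) : Prop :=
  forall A : X -> Prop, connected_subset d A -> forall x y, A x -> A y -> x = y.

Definition no_isolated_points {X : Type} (d : X -> X -> R) : Prop :=
  forall x eps, eps > 0 -> exists y, y <> x /\ d x y < eps.

Definition cantor_space {X : Type} (d : X -> X -> R) : Prop :=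
  is_metric d /\ (exists x : X, True) /\ compact_space d /\
  totally_disconnected d /\ no_isolated_points d.

Definition continuous_map {X Y : Type} (dX : X -> X -> R) (dY : Y -> Y -> R)
  (f : X -> Y) : Prop :=
  forall x eps, eps > 0 -> exists delta, delta > 0 /\
    forall y, dX x y < delta -> dY (f x) (f y) < eps.

Definition homeomorphism {X : Type} (d : X -> X -> R) (T : X -> X) : Prop :=
  continuous_map d d T /\
  exists S : X -> X, continuous_map d d S /\
    (forall x, S (T x) = x) /\ (forall x, T (S x) = x).

(* y is in the (two-sided) orbit of x: y = T^n x or y = T^{-n} x *)
Definition in_orbit {X : Type} (T : X -> X) (x y : X) : Prop :=
  exists n : nat, y = Nat.iter n T x \/ x = Nat.iter n T y.

Definition minimal {X : Type} (d : X -> X -> R) (T : X -> X) : Prop :=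
  forall x z eps, eps > 0 -> exists y, in_orbit T x y /\ d z y < eps.

Definition minimal_cantor_system {X : Type} (d : X -> X -> R) (T : X -> X) : Prop :=
  cantor_space d /\ homeomorphism d T /\ minimal d T.

(* T^{-j} A = preimage of A under T^j *)
Definition preim_iter {X : Type} (T : X -> X) (j : nat) (A : X -> Prop) : X -> Prop :=
  fun x => A (Nat.iter j T x).

(* atom (k,j) of P(n): T^{-j} B_k(n), for 1 <= k <= C n, 0 <= j < h n k *)
Definition is_atom_index (C : nat -> nat) (h : nat -> nat -> nat) (n k j : nat) : Prop :=
  (1 <= k <= C n)%nat /\ (j < h n k)%nat.

Definition atom {X : Type} (T : X -> X) (B : nat -> nat -> X -> Prop)
  (n k j : nat) : X -> Prop := preim_iter T j (B n k).

Definition roof {X : Type} (C : nat -> nat) (B : nat -> nat -> X -> Prop) (n : nat) : X -> Prop :=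
  fun x => exists k, (1 <= k <= C n)%nat /\ B n k x.

Definition subset {X : Type} (A A' : X -> Prop) : Prop := forall x, A x -> A' x.

Definition CKR_partition {X : Type} (d : X -> X -> R) (T : X -> X)
  (C : nat -> nat) (h : nat -> nat -> nat) (B : nat -> nat -> X -> Prop) (n : nat) : Prop :=
  (forall k, (1 <= k <= C n)%nat ->
     is_clopen d (B n k) /\ (exists x, B n k x) /\ (1 <= h n k)%nat) /\
  (forall x, exists k j, is_atom_index C h n k j /\ atom T B n k j x) /\
  (forall x k j k' j', is_atom_index C h n k j -> is_atom_index C h n k' j' ->
     atom T B n k j x -> atom T B n k' j' x -> k = k' /\ j = j').

Definition CKR_sequence {X : Type} (d : X -> X -> R) (T : X -> X)
  (C : nat -> nat) (h : nat -> nat -> nat) (B : nat -> nat -> X -> Prop) : Prop :=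
  (forall n, CKR_partition d T C h B n) /\
  (C 0%nat = 1%nat /\ h 0%nat 1%nat = 1%nat /\ forall x, B 0%nat 1%nat x) /\
  (* KR1 *)
  (forall n, subset (roof C B (S n)) (roof C B n)) /\
  (* KR2 *)
  (forall n k j, is_atom_index C h (S n) k j ->
     exists k' j', is_atom_index C h n k' j' /\
       subset (atom T B (S n) k j) (atom T B n k' j')) /\
  (* KR3 *)
  (exists x0, forall y, (forall n, roof C B n y) <-> y = x0) /\
  (* KR4: the atoms of all P(n) form a base of the topology *)
  (forall x eps, eps > 0 -> exists n k j, is_atom_index C h n k j /\
     atom T B n k j x /\ subset (atom T B n k j) (fun y => d x y < eps)) /\
  (* KR5 *)
  (forall n k l, (1 <= n)%nat -> (1 <= k <= C (n - 1))%nat -> (1 <= l <= C n)%nat ->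
     exists j, (j < h n l)%nat /\ subset (atom T B n l j) (B (n - 1)%nat k)) /\
  (* KR6 *)
  (forall n, (1 <= n)%nat -> subset (roof C B n) (B (n - 1)%nat 1%nat)).

Definition Cx_dist (a b : Cx) : R := Cx_norm (Cx_sub a b).

Definition continuous_eigenvalue {X : Type} (d : X -> X -> R) (T : X -> X) (lam : Cx) : Prop :=
  exists f : X -> Cx, continuous_map d Cx_dist f /\ (exists x, f x <> Cx0) /\
    forall x, f (T x) = Cx_mul lam (f x).

Definition max_h (C : nat -> nat) (h : nat -> nat -> nat) (n : nat) : nat :=
  fold_right Nat.max 0%nat (map (h n) (seq 1 (C n))).
Definition min_h (C : nat -> nat) (h : nat -> nat -> nat) (n : nat) : nat :=
  fold_right Nat.min (h n 1%nat) (map (h n) (seq 1 (C n))).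
Definition max_defect (C : nat -> nat) (h : nat -> nat -> nat) (lam : Cx) (n : nat) : R :=
  fold_right Rmax 0 (map (fun k => Cx_norm (Cx_sub (Cx_pow lam (h n k)) Cx1)) (seq 1 (C n))).

(* m-th term of the series, m >= 1 *)
Definition series_term (C : nat -> nat) (h : nat -> nat -> nat) (lam : Cx) (m : nat) : R :=
  INR (max_h C h (S m)) / INR (min_h C h m) * max_defect C h lam m.

(* Main.v *)
Require Import Defs.
From Stdlib Require Import Reals Lra Lia List Psatz.
From Stdlib Require Import ClassicalEpsilon Classical.
Open Scope R_scope.

Lemma Cx_ext a b : Cre a = Cre b -> Cim a = Cim b -> a = b.
Proof. destruct a, b; simpl; intros; subst; reflexivity. Qed.

Lemma Cx_norm_pos a : 0 <= Cx_norm a.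
Proof. apply sqrt_pos. Qed.

Lemma Cx_norm_tri a b : Cx_norm (Cx_add a b) <= Cx_norm a + Cx_norm b.
Proof.
  destruct a as [a1 a2], b as [b1 b2]; unfold Cx_norm, Cx_add; simpl.
  assert (HQ: 0 <= a1*a1+a2*a2) by nra.
  assert (HR: 0 <= b1*b1+b2*b2) by nra.
  pose proof (sqrt_pos (a1*a1+a2*a2)) as Hs.
  pose proof (sqrt_pos (b1*b1+b2*b2)) as Ht.
  pose proof (sqrt_sqrt _ HQ) as Hss.
  pose proof (sqrt_sqrt _ HR) as Htt.
  set (s := sqrt (a1*a1+a2*a2)) in *. set (t := sqrt (b1*b1+b2*b2)) in *.
  rewrite <- (sqrt_square (s + t)) by lra.
  apply sqrt_le_1_alt.
  assert (Hst: 0 <= s*t) by nra.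
  assert (Hst2: (s*t)*(s*t) = (a1*a1+a2*a2)*(b1*b1+b2*b2)) by nra.
  assert (Hw: (a1*b1+a2*b2)*(a1*b1+a2*b2) <= (s*t)*(s*t)) by (rewrite Hst2; pose proof (Rle_0_sqr (a1*b2-a2*b1)); unfold Rsqr in *; nra).
  assert (Hw2: a1*b1+a2*b2 <= s*t) by nra.
  nra.
Qed.

Lemma Cx_norm_mul a b : Cx_norm (Cx_mul a b) = Cx_norm a * Cx_norm b.
Proof.
  destruct a as [a1 a2], b as [b1 b2]; unfold Cx_norm, Cx_mul; simpl.
  rewrite <- sqrt_mult by nra. f_equal. ring.
Qed.

Lemma Cx_norm_0 a : Cx_norm a = 0 -> a = Cx0.
Proof.
  destruct a as [a1 a2]; unfold Cx_norm; simpl; intro H.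
  apply sqrt_eq_0 in H; [|nra].
  apply Cx_ext; simpl; nra.
Qed.

Lemma Cx_norm_Cx0 : Cx_norm Cx0 = 0.
Proof. unfold Cx_norm; simpl. replace (0*0+0*0) with 0 by ring. apply sqrt_0. Qed.

Lemma Cx_norm_comp a : Rabs (Cre a) <= Cx_norm a /\ Rabs (Cim a) <= Cx_norm a.
Proof.
  destruct a as [a1 a2]; unfold Cx_norm; simpl.
  split; rewrite <- sqrt_Rsqr_abs; apply sqrt_le_1_alt; unfold Rsqr; nra.
Qed.

Lemma Rabs_le_s x e : Rabs x <= e -> -e <= x <= e.
Proof. unfold Rabs; destruct (Rcase_abs x); lra. Qed.

Lemma Cx_norm_le_comp a e : Rabs (Cre a) <= e -> Rabs (Cim a) <= e -> Cx_norm a <= 2*e.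
Proof.
  destruct a as [a1 a2]; unfold Cx_norm; simpl; intros H1 H2.
  assert (0 <= e) by (pose proof (Rabs_pos a1); lra).
  rewrite <- (sqrt_square (2*e)) by lra. apply sqrt_le_1_alt.
  apply Rabs_le_s in H1; apply Rabs_le_s in H2. nra.
Qed.

Lemma Cx_mul_assoc a b c : Cx_mul a (Cx_mul b c) = Cx_mul (Cx_mul a b) c.
Proof. apply Cx_ext; simpl; ring. Qed.

Lemma Cx_pow_add a m n : Cx_pow a (m + n) = Cx_mul (Cx_pow a m) (Cx_pow a n).
Proof.
  induction m; simpl.
  - apply Cx_ext; simpl; ring.
  - rewrite IHm, Cx_mul_assoc. reflexivity.
Qed.

Lemma Cx_norm_Cx1 : Cx_norm Cx1 = 1.
Proof. unfold Cx_norm; simpl. replace (1*1+0*0) with 1 by ring. apply sqrt_1. Qed.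

Lemma Cx_norm_pow a n : Cx_norm a = 1 -> Cx_norm (Cx_pow a n) = 1.
Proof.
  intro H; induction n; simpl. apply Cx_norm_Cx1.
  rewrite Cx_norm_mul, H, IHn; ring.
Qed.

Definition Cx_conj (a : Cx) : Cx := mkCx (Cre a) (- Cim a).

Lemma Cx_conj_pow a n : Cx_pow (Cx_conj a) n = Cx_conj (Cx_pow a n).
Proof.
  induction n; simpl. apply Cx_ext; simpl; ring.
  rewrite IHn. apply Cx_ext; simpl; ring.
Qed.

Lemma Cx_norm_conj a : Cx_norm (Cx_conj a) = Cx_norm a.
Proof. unfold Cx_norm, Cx_conj; simpl. f_equal. ring. Qed.

Lemma Cx_norm_sub_sym a b : Cx_norm (Cx_sub a b) = Cx_norm (Cx_sub b a).
Proof. unfold Cx_norm, Cx_sub; simpl. f_equal. ring. Qed.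

Lemma Cx_dist_tri a b c : Cx_dist a c <= Cx_dist a b + Cx_dist b c.
Proof.
  unfold Cx_dist. replace (Cx_sub a c) with (Cx_add (Cx_sub a b) (Cx_sub b c))
    by (apply Cx_ext; simpl; ring). apply Cx_norm_tri.
Qed.

Lemma Cx_pow_defect_add a m n : Cx_norm a = 1 ->
  Cx_norm (Cx_sub (Cx_pow a (m+n)) Cx1) <=
  Cx_norm (Cx_sub (Cx_pow a m) Cx1) + Cx_norm (Cx_sub (Cx_pow a n) Cx1).
Proof.
  intro H. rewrite Cx_pow_add.
  replace (Cx_sub (Cx_mul (Cx_pow a m) (Cx_pow a n)) Cx1) with
    (Cx_add (Cx_mul (Cx_pow a m) (Cx_sub (Cx_pow a n) Cx1)) (Cx_sub (Cx_pow a m) Cx1))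
    by (apply Cx_ext; simpl; ring).
  eapply Rle_trans. apply Cx_norm_tri.
  rewrite Cx_norm_mul, Cx_norm_pow by auto. lra.
Qed.
Implicit Types (C : nat -> nat) (h : nat -> nat -> nat).

Lemma iter_S_r {X} (T : X -> X) j x : Nat.iter (S j) T x = Nat.iter j T (T x).
Proof. induction j; simpl; auto. simpl in IHj. rewrite IHj. reflexivity. Qed.

Lemma iter_add {X} (T : X -> X) a b x : Nat.iter (a + b) T x = Nat.iter a T (Nat.iter b T x).
Proof. induction a; simpl; auto. rewrite IHa; auto. Qed.

Lemma iter_add' {X} (T : X -> X) a b x : Nat.iter (a + b) T x = Nat.iter b T (Nat.iter a T x).
Proof. rewrite Nat.add_comm. apply iter_add. Qed.


Lemma atom_down {X} (T : X -> X) C h (B : nat -> nat -> X -> Prop) n k j i x :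
  atom T B n k j x -> (i <= j)%nat -> atom T B n k (j - i) (Nat.iter i T x).
Proof.
  unfold atom, preim_iter. intros H Hi. rewrite <- iter_add.
  replace (j - i + i)%nat with j by lia. exact H.
Qed.

Lemma atom_notroof {X} (d : X -> X -> R) (T : X -> X) C h (B : nat -> nat -> X -> Prop) n k j x :
  CKR_partition d T C h B n -> is_atom_index C h n k j -> (1 <= j)%nat ->
  atom T B n k j x -> ~ roof C B n x.
Proof.
  intros [Hc [_ Hu]] Hij Hj Ha [k' [Hk' Hb]].
  destruct (Hc k' Hk') as [_ [_ Hh]].
  assert (Hv : is_atom_index C h n k' 0) by (split; [exact Hk'| lia]).
  destruct (Hu x k j k' 0%nat Hij Hv Ha Hb). lia.
Qed.

Definition rt {X} (T : X -> X) (C : nat -> nat) (h : nat -> nat -> nat)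
  (B : nat -> nat -> X -> Prop) (n : nat) (x : X) : nat :=
  epsilon (inhabits 0%nat) (fun j => exists k, is_atom_index C h n k j /\ atom T B n k j x).

Lemma rt_spec {X} (d : X -> X -> R) (T : X -> X) C h (B : nat -> nat -> X -> Prop) n x :
  CKR_partition d T C h B n ->
  exists k, is_atom_index C h n k (rt T C h B n x) /\ atom T B n k (rt T C h B n x) x.
Proof.
  intros [_ [Hcov _]]. unfold rt. apply epsilon_spec.
  destruct (Hcov x) as [k [j H]]. exists j, k. exact H.
Qed.

Lemma rt_roof {X} (d : X -> X -> R) (T : X -> X) C h (B : nat -> nat -> X -> Prop) n x :
  CKR_partition d T C h B n -> roof C B n (Nat.iter (rt T C h B n x) T x).
Proof.
  intro Hp. destruct (rt_spec d T C h B n x Hp) as [k [[Hk _] Ha]].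
  exists k. split; auto.
Qed.

Lemma rt_before {X} (d : X -> X -> R) (T : X -> X) C h (B : nat -> nat -> X -> Prop) n x i :
  CKR_partition d T C h B n -> (i < rt T C h B n x)%nat -> ~ roof C B n (Nat.iter i T x).
Proof.
  intros Hp Hi. destruct (rt_spec d T C h B n x Hp) as [k [Hv Ha]].
  apply (atom_notroof d T C h B n k (rt T C h B n x - i)%nat); auto.
  - destruct Hv; split; auto; lia.
  - lia.
  - apply atom_down; auto; lia.
Qed.

Lemma rt_hit {X} (d : X -> X -> R) (T : X -> X) C h (B : nat -> nat -> X -> Prop) n x j :
  CKR_partition d T C h B n -> roof C B n (Nat.iter j T x) ->
  (forall i, (i < j)%nat -> ~ roof C B n (Nat.iter i T x)) ->
  rt T C h B n x = j.
Proof.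
  intros Hp Hr Hb.
  destruct (Nat.lt_total j (rt T C h B n x)) as [Hl | [He | Hl]]; auto.
  - exfalso. exact (rt_before d T C h B n x j Hp Hl Hr).
  - exfalso. exact (Hb _ Hl (rt_roof d T C h B n x Hp)).
Qed.

Lemma rt_atom {X} (d : X -> X -> R) (T : X -> X) C h (B : nat -> nat -> X -> Prop) n k j x :
  CKR_partition d T C h B n -> is_atom_index C h n k j -> atom T B n k j x ->
  rt T C h B n x = j.
Proof.
  intros Hp Hv Ha. apply (rt_hit d); auto.
  - exists k. split; [apply Hv | exact Ha].
  - intros i Hi. apply (atom_notroof d T C h B n k (j - i)%nat); auto.
    + destruct Hv; split; auto; lia.
    + lia.
    + apply atom_down; auto; lia.
Qed.

Lemma rt_bound {X} (d : X -> X -> R) (T : X -> X) C h (B : nat -> nat -> X -> Prop) n x :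
  CKR_partition d T C h B n ->
  exists k, (1 <= k <= C n)%nat /\ (rt T C h B n x < h n k)%nat.
Proof.
  intro Hp. destruct (rt_spec d T C h B n x Hp) as [k [[Hk Hl] _]]. eauto.
Qed.

Lemma return_time {X} (d : X -> X -> R) (T : X -> X) C h (B : nat -> nat -> X -> Prop) n y :
  CKR_partition d T C h B n -> roof C B n y ->
  exists k, (1 <= k <= C n)%nat /\ roof C B n (Nat.iter (h n k) T y) /\
    forall i, (1 <= i < h n k)%nat -> ~ roof C B n (Nat.iter i T y).
Proof.
  intros Hp Hy.
  destruct (rt_spec d T C h B n (T y) Hp) as [k [[Hk Hl] Ha]].
  set (j := rt T C h B n (T y)) in *.
  assert (Hj : h n k = S j).
  { destruct (Nat.eq_dec (h n k) (S j)) as [E|E]; auto. exfalso.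
    apply (atom_notroof d T C h B n k (S j) y Hp); auto.
    - split; auto; lia.
    - lia.
    - unfold atom, preim_iter. rewrite iter_S_r. exact Ha. }
  exists k. split; auto. split.
  - rewrite Hj, iter_S_r. exists k. split; auto.
  - intros i Hi. replace i with (S (i - 1)) by lia. rewrite iter_S_r.
    apply (atom_notroof d T C h B n k (j - (i - 1))%nat); auto.
    + split; auto; lia.
    + lia.
    + apply atom_down; auto; lia.
Qed.

Lemma fold_max_ge a l : In a l -> (a <= fold_right Nat.max 0 l)%nat.
Proof. induction l; simpl; [tauto|]. intros [->|H]; [lia|]. specialize (IHl H); lia. Qed.

Lemma fold_min_le a i l : In a l -> (fold_right Nat.min i l <= a)%nat.
Proof. induction l; simpl; [tauto|]. intros [->|H]; [lia|]. specialize (IHl H); lia. Qed.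

Lemma fold_min_ge b i l : (b <= i)%nat -> (forall a, In a l -> (b <= a)%nat) ->
  (b <= fold_right Nat.min i l)%nat.
Proof.
  induction l; simpl; auto. intros Hi Ha.
  assert (b <= a)%nat by auto. assert (b <= fold_right Nat.min i l)%nat by auto. lia.
Qed.

Lemma fold_Rmax_ge a l : In a l -> a <= fold_right Rmax 0 l.
Proof.
  induction l; simpl; [tauto|]. intros [->|H]. apply Rmax_l.
  eapply Rle_trans. apply IHl; auto. apply Rmax_r.
Qed.

Lemma fold_Rmax_pos l : 0 <= fold_right Rmax 0 l.
Proof. induction l; simpl. lra. eapply Rle_trans. apply IHl. apply Rmax_r. Qed.

Lemma h_le_max C h n k : (1 <= k <= C n)%nat -> (h n k <= max_h C h n)%nat.
Proof. intro Hk. apply fold_max_ge. apply in_map. apply in_seq. lia. Qed.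

Lemma min_le_h C h n k : (1 <= k <= C n)%nat -> (min_h C h n <= h n k)%nat.
Proof. intro Hk. apply fold_min_le. apply in_map. apply in_seq. lia. Qed.

Lemma defect_le_max C h lam n k : (1 <= k <= C n)%nat ->
  Cx_norm (Cx_sub (Cx_pow lam (h n k)) Cx1) <= max_defect C h lam n.
Proof.
  intro Hk. apply fold_Rmax_ge.
  apply (in_map (fun k => Cx_norm (Cx_sub (Cx_pow lam (h n k)) Cx1))). apply in_seq. lia.
Qed.

Lemma max_defect_pos C h lam n : 0 <= max_defect C h lam n.
Proof. apply fold_Rmax_pos. Qed.

Lemma min_h_pos {X} (d : X -> X -> R) (T : X -> X) C h (B : nat -> nat -> X -> Prop) n :
  CKR_partition d T C h B n -> (1 <= C n)%nat -> (1 <= min_h C h n)%nat.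
Proof.
  intros [Hc _] HC. apply fold_min_ge.
  - destruct (Hc 1%nat) as [_ [_ H]]; [lia|]. exact H.
  - intros a Ha. apply in_map_iff in Ha. destruct Ha as [k [<- Hk]].
    apply in_seq in Hk. destruct (Hc k) as [_ [_ H]]; [lia|]. exact H.
Qed.

Lemma rt_split {X} (d : X -> X -> R) (T : X -> X) C h (B : nat -> nat -> X -> Prop) n x :
  CKR_partition d T C h B n -> CKR_partition d T C h B (S n) ->
  subset (roof C B (S n)) (roof C B n) ->
  rt T C h B (S n) x = (rt T C h B n x + rt T C h B (S n) (Nat.iter (rt T C h B n x) T x))%nat.
Proof.
  intros Hp Hp1 Hs. apply (rt_hit d); auto.
  - rewrite iter_add'. apply (rt_roof d); auto.
  - intros i Hi. destruct (Nat.lt_ge_cases i (rt T C h B n x)) as [Hl|Hl].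
    + intro Hr. apply Hs in Hr. exact (rt_before d T C h B n x i Hp Hl Hr).
    + replace i with (rt T C h B n x + (i - rt T C h B n x))%nat by lia.
      rewrite iter_add'. apply (rt_before d T C h B); auto. lia.
Qed.

Definition defect (lam : Cx) (m : nat) : R := Cx_norm (Cx_sub (Cx_pow lam m) Cx1).

Lemma defect0 lam : defect lam 0 = 0.
Proof.
  unfold defect. simpl. replace (Cx_sub Cx1 Cx1) with Cx0 by (apply Cx_ext; simpl; ring).
  apply Cx_norm_Cx0.
Qed.

Lemma count_lemma {X} (d : X -> X -> R) (T : X -> X) C h (B : nat -> nat -> X -> Prop) n lam :
  Cx_norm lam = 1 ->
  CKR_partition d T C h B n -> CKR_partition d T C h B (S n) ->
  subset (roof C B (S n)) (roof C B n) ->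
  forall m y, roof C B n y -> rt T C h B (S n) y = m ->
  exists c, (c * min_h C h n <= m)%nat /\ defect lam m <= INR c * max_defect C h lam n.
Proof.
  intros Hl Hp Hp1 Hs m. induction m as [m IH] using (well_founded_induction Wf_nat.lt_wf). intros y Hy Hm.
  destruct m as [|m'].
  - exists 0%nat. split; [lia|]. rewrite defect0. simpl. lra.
  - assert (Hny : ~ roof C B (S n) y).
    { intro Hr. assert (rt T C h B (S n) y = 0%nat).
      { apply (rt_hit d); auto. intros; lia. } lia. }
    destruct (return_time d T C h B n y Hp Hy) as [k [Hk [Hz Hb]]].
    set (t := h n k) in *. set (z := Nat.iter t T y) in *.
    assert (Ht1 : (1 <= t)%nat) by (destruct Hp as [Hc _]; apply (Hc k Hk)).
    assert (Hsplit : rt T C h B (S n) y = (t + rt T C h B (S n) z)%nat).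
    { apply (rt_hit d); auto.
      - rewrite iter_add'. apply (rt_roof d); auto.
      - intros i Hi. destruct (Nat.eq_dec i 0) as [->|Hi0]; [exact Hny|].
        destruct (Nat.lt_ge_cases i t) as [Hl'|Hl'].
        + intro Hr. apply Hs in Hr. apply (Hb i); auto. lia.
        + replace i with (t + (i - t))%nat by lia. rewrite iter_add'.
          apply (rt_before d T C h B); auto. unfold z in Hi. lia. }
    destruct (IH (rt T C h B (S n) z)) with (y := z) as [c [Hc1 Hc2]]; auto.
    { rewrite Hsplit in Hm. lia. }
    exists (S c). split.
    + pose proof (min_le_h C h n k Hk). simpl. fold t in H. nia.
    + rewrite <- Hm, Hsplit. unfold defect. eapply Rle_trans. apply Cx_pow_defect_add; auto.
      rewrite S_INR. pose proof (defect_le_max C h lam n k Hk). fold t in H. unfold defect in Hc2.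
      lra.
Qed.

Definition fn {X} (T : X -> X) C h (B : nat -> nat -> X -> Prop) (lam : Cx) n x : Cx :=
  Cx_pow (Cx_conj lam) (rt T C h B n x).

Lemma diff_bound {X} (d : X -> X -> R) (T : X -> X) C h (B : nat -> nat -> X -> Prop) n lam x :
  Cx_norm lam = 1 ->
  CKR_partition d T C h B n -> CKR_partition d T C h B (S n) ->
  subset (roof C B (S n)) (roof C B n) -> (1 <= C n)%nat ->
  Cx_norm (Cx_sub (fn T C h B lam (S n) x) (fn T C h B lam n x)) <= series_term C h lam n.
Proof.
  intros Hl Hp Hp1 Hs HC. unfold fn.
  rewrite (rt_split d T C h B n x Hp Hp1 Hs).
  set (a := rt T C h B n x). set (y := Nat.iter a T x).
  set (r := rt T C h B (S n) y).
  rewrite Cx_pow_add.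
  replace (Cx_sub (Cx_mul (Cx_pow (Cx_conj lam) a) (Cx_pow (Cx_conj lam) r)) (Cx_pow (Cx_conj lam) a))
    with (Cx_mul (Cx_pow (Cx_conj lam) a) (Cx_sub (Cx_pow (Cx_conj lam) r) Cx1))
    by (apply Cx_ext; simpl; ring).
  rewrite Cx_norm_mul, Cx_norm_pow by (rewrite Cx_norm_conj; auto).
  rewrite Rmult_1_l, Cx_conj_pow.
  replace (Cx_sub (Cx_conj (Cx_pow lam r)) Cx1) with (Cx_conj (Cx_sub (Cx_pow lam r) Cx1))
    by (apply Cx_ext; simpl; ring).
  rewrite Cx_norm_conj.
  destruct (count_lemma d T C h B n lam Hl Hp Hp1 Hs r y) as [c [Hc1 Hc2]]; auto.
  { apply (rt_roof d); auto. }
  destruct (rt_bound d T C h B (S n) y Hp1) as [k [Hk Hr]].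
  pose proof (h_le_max C h (S n) k Hk).
  pose proof (min_h_pos d T C h B n Hp HC) as Hmin.
  assert (Hcm : (c * min_h C h n <= max_h C h (S n))%nat) by (fold r in Hr; lia).
  apply le_INR in Hcm. rewrite mult_INR in Hcm.
  apply lt_0_INR in Hmin. 
  pose proof (max_defect_pos C h lam n).
  unfold series_term. unfold defect in Hc2. eapply Rle_trans; [exact Hc2|].
  apply Rmult_le_compat_r; auto.
  apply (Rmult_le_reg_r (INR (min_h C h n))); auto.
  unfold Rdiv. rewrite Rmult_assoc, Rinv_l by lra. lra.
Qed.

Lemma lim_bound u L c eps N : Un_cv u L -> (forall m, (m >= N)%nat -> Rabs (u m - c) <= eps) ->
  Rabs (L - c) <= eps.
Proof.
  intros Hu Hb. apply Rnot_lt_le. intro Hlt.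
  destruct (Hu (Rabs (L - c) - eps)) as [N' HN']; [lra|].
  specialize (HN' (Nat.max N N')). specialize (Hb (Nat.max N N')).
  unfold Rdist in HN'.
  assert (H1 : Rabs (u (Nat.max N N') - L) < Rabs (L - c) - eps) by (apply HN'; lia).
  assert (H2 : Rabs (u (Nat.max N N') - c) <= eps) by (apply Hb; lia).
  revert H1 H2 Hlt. unfold Rabs; repeat destruct Rcase_abs; lra.
Qed.

Lemma lim_ev_eq u v L1 L2 N : Un_cv u L1 -> Un_cv v L2 ->
  (forall n, (n >= N)%nat -> u n = v n) -> L1 = L2.
Proof.
  intros Hu Hv He. apply (UL_sequence u); auto.
  intros eps Heps. destruct (Hv eps Heps) as [N' HN']. exists (Nat.max N N').
  intros n Hn. rewrite He by lia. apply HN'. lia.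
Qed.

Fixpoint psum (a : nat -> R) (k : nat) : R :=
  match k with O => 0 | S k' => psum a k' + a k' end.

Lemma psum_sum a M : psum a (S M) = sum_f_R0 a M.
Proof. induction M; simpl in *. lra. rewrite <- IHM. reflexivity. Qed.

Lemma tele {X} (g : nat -> X -> Cx) (a : nat -> R) x :
  (forall i, Cx_norm (Cx_sub (g (S i) x) (g i x)) <= a i) ->
  forall n p, Cx_norm (Cx_sub (g (n + p)%nat x) (g n x)) <= psum a (n + p) - psum a n.
Proof.
  intros Hb n p. induction p.
  - rewrite Nat.add_0_r. replace (Cx_sub (g n x) (g n x)) with Cx0 by (apply Cx_ext; simpl; ring).
    rewrite Cx_norm_Cx0. lra.
  - replace (n + S p)%nat with (S (n + p)) by lia. simpl psum.
    replace (Cx_sub (g (S (n + p)) x) (g n x)) with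
      (Cx_add (Cx_sub (g (S (n + p)) x) (g (n+p)%nat x)) (Cx_sub (g (n + p)%nat x) (g n x)))
      by (apply Cx_ext; simpl; ring).
    eapply Rle_trans. apply Cx_norm_tri. specialize (Hb (n+p)%nat). lra.
Qed.

Lemma unif_cauchy {X} (g : nat -> X -> Cx) (a : nat -> R) :
  (forall i x, Cx_norm (Cx_sub (g (S i) x) (g i x)) <= a i) ->
  (exists l, Un_cv (fun M => sum_f_R0 a M) l) ->
  forall eps, eps > 0 -> exists N, forall n m x, (n >= N)%nat -> (m >= N)%nat ->
    Cx_norm (Cx_sub (g n x) (g m x)) < eps.
Proof.
  intros Hb [l Hl] eps Heps.
  destruct (Hl (eps/2)) as [N HN]; [lra|].
  assert (Key : forall n p x, (n >= S N)%nat -> Cx_norm (Cx_sub (g (n + p)%nat x) (g n x)) < eps).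
  { intros n p x Hn. eapply Rle_lt_trans. apply (tele g a x (fun i => Hb i x)).
    destruct n as [|n']; [lia|].
    replace (S n' + p)%nat with (S (n' + p)) by lia.
    rewrite !psum_sum.
    assert (H1 := HN (n' + p)%nat ltac:(lia)). assert (H2 := HN n' ltac:(lia)).
    unfold Rdist in *. revert H1 H2. unfold Rabs; repeat destruct Rcase_abs; lra. }
  exists (S N). intros n m x Hn Hm.
  destruct (Nat.le_ge_cases n m) as [Hnm|Hnm].
  - replace m with (n + (m - n))%nat by lia. rewrite Cx_norm_sub_sym. apply Key; lia.
  - replace n with (m + (n - m))%nat by lia. apply Key; lia.
Qed.

Lemma unif_limit {X} (g : nat -> X -> Cx) :
  (forall eps, eps > 0 -> exists N, forall n m x, (n >= N)%nat -> (m >= N)%nat ->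
    Cx_norm (Cx_sub (g n x) (g m x)) < eps) ->
  exists f : X -> Cx,
    (forall x, Un_cv (fun n => Cre (g n x)) (Cre (f x)) /\ Un_cv (fun n => Cim (g n x)) (Cim (f x))) /\
    (forall eps, eps > 0 -> exists N, forall n x, (n >= N)%nat ->
      Rabs (Cre (g n x) - Cre (f x)) <= eps /\ Rabs (Cim (g n x) - Cim (f x)) <= eps).
Proof.
  intros HC.
  assert (Hex : forall x, exists z : Cx, Un_cv (fun n => Cre (g n x)) (Cre z) /\
                                          Un_cv (fun n => Cim (g n x)) (Cim z)).
  { intro x.
    assert (Hre : Cauchy_crit (fun n => Cre (g n x))).
    { intros eps Heps. destruct (HC eps Heps) as [N HN]. exists N. intros n m Hn Hm.
      unfold Rdist. eapply Rle_lt_trans; [|apply (HN n m x Hn Hm)].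
      apply (Cx_norm_comp (Cx_sub (g n x) (g m x))). }
    assert (Him : Cauchy_crit (fun n => Cim (g n x))).
    { intros eps Heps. destruct (HC eps Heps) as [N HN]. exists N. intros n m Hn Hm.
      unfold Rdist. eapply Rle_lt_trans; [|apply (HN n m x Hn Hm)].
      apply (Cx_norm_comp (Cx_sub (g n x) (g m x))). }
    destruct (R_complete _ Hre) as [l1 H1]. destruct (R_complete _ Him) as [l2 H2].
    exists (mkCx l1 l2). simpl. auto. }
  exists (fun x => proj1_sig (constructive_indefinite_description _ (Hex x))).
  assert (Hf : forall x, Un_cv (fun n => Cre (g n x))
       (Cre (proj1_sig (constructive_indefinite_description _ (Hex x)))) /\
     Un_cv (fun n => Cim (g n x))
       (Cim (proj1_sig (constructive_indefinite_description _ (Hex x))))).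
  { intro x. exact (proj2_sig (constructive_indefinite_description _ (Hex x))). }
  split; auto.
  intros eps Heps. destruct (HC eps Heps) as [N HN]. exists N. intros n x Hn.
  destruct (Hf x) as [H1 H2]. split.
  - rewrite Rabs_minus_sym. apply (lim_bound _ _ _ _ N H1). intros m Hm.
    left. eapply Rle_lt_trans; [|apply (HN m n x Hm Hn)].
    apply (Cx_norm_comp (Cx_sub (g m x) (g n x))).
  - rewrite Rabs_minus_sym. apply (lim_bound _ _ _ _ N H2). intros m Hm.
    left. eapply Rle_lt_trans; [|apply (HN m n x Hm Hn)].
    apply (Cx_norm_comp (Cx_sub (g m x) (g n x))).
Qed.

Lemma limit_continuous {X} (d : X -> X -> R) (g : nat -> X -> Cx) (f : X -> Cx) :
  (forall n x, exists delta, delta > 0 /\ forall y, d x y < delta -> g n y = g n x) ->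
  (forall eps, eps > 0 -> exists N, forall n x, (n >= N)%nat ->
      Rabs (Cre (g n x) - Cre (f x)) <= eps /\ Rabs (Cim (g n x) - Cim (f x)) <= eps) ->
  continuous_map d Cx_dist f.
Proof.
  intros Hlc Hu x eps Heps.
  destruct (Hu (eps/5)) as [N HN]; [lra|].
  destruct (Hlc N x) as [delta [Hd Hy]].
  exists delta. split; auto. intros y Hdy.
  specialize (Hy y Hdy).
  destruct (HN N x (le_n N)) as [A1 A2]. destruct (HN N y (le_n N)) as [B1 B2].
  rewrite Hy in B1, B2.
  unfold Cx_dist. eapply Rle_lt_trans. apply (Cx_norm_le_comp _ (2*(eps/5))).
  - simpl. revert A1 B1. unfold Rabs; repeat destruct Rcase_abs; lra.
  - simpl. revert A2 B2. unfold Rabs; repeat destruct Rcase_abs; lra.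
  - lra.
Qed.

Lemma cont_iter {X} (d : X -> X -> R) (T : X -> X) j :
  continuous_map d d T -> continuous_map d d (fun x => Nat.iter j T x).
Proof.
  intro HT. induction j; intros x eps Heps; simpl.
  - exists eps. split; auto.
  - destruct (HT (Nat.iter j T x) eps Heps) as [d1 [Hd1 H1]].
    destruct (IHj x d1 Hd1) as [d2 [Hd2 H2]].
    exists d2. split; auto.
Qed.

Lemma rt_loc_const {X} (d : X -> X -> R) (T : X -> X) C h (B : nat -> nat -> X -> Prop) n :
  CKR_partition d T C h B n -> continuous_map d d T ->
  forall x, exists delta, delta > 0 /\ forall y, d x y < delta -> rt T C h B n y = rt T C h B n x.
Proof.
  intros Hp HT x.
  destruct (rt_spec d T C h B n x Hp) as [k [Hv Ha]].
  set (j := rt T C h B n x) in *.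
  destruct Hp as [Hc Hrest].
  destruct (Hc k (proj1 Hv)) as [[Hop _] _].
  destruct (Hop _ Ha) as [eps [Heps Hb]].
  destruct (cont_iter d T j HT x eps Heps) as [delta [Hd Hy]].
  exists delta. split; auto. intros y Hdy.
  apply (rt_atom d T C h B n k j); auto. split; auto.
  unfold atom, preim_iter. apply Hb. apply Hy. exact Hdy.
Qed.

Lemma union_closed {X} (d : X -> X -> R) (A : nat -> X -> Prop) K :
  (forall k, (1 <= k <= K)%nat -> is_closed d (A k)) ->
  is_closed d (fun x => exists k, (1 <= k <= K)%nat /\ A k x).
Proof.
  induction K; intros Hc x Hx.
  - exists 1. split; [lra|]. intros y _ [k [Hk _]]. lia.
  - destruct (IHK (fun k Hk => Hc k ltac:(lia)) x) as [e1 [He1 H1]].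
    { intros [k [Hk Ha]]. apply Hx. exists k. split; auto; lia. }
    destruct (Hc (S K) ltac:(lia) x) as [e2 [He2 H2]].
    { intro Ha. apply Hx. exists (S K). split; auto; lia. }
    exists (Rmin e1 e2). split. apply Rmin_pos; auto.
    intros y Hy [k [Hk Ha]].
    destruct (Nat.eq_dec k (S K)) as [->|Hne].
    + apply (H2 y); auto. eapply Rlt_le_trans; [exact Hy| apply Rmin_r].
    + apply (H1 y). eapply Rlt_le_trans; [exact Hy| apply Rmin_l].
      exists k. split; auto. lia.
Qed.

Lemma closed_limit {X} (d : X -> X -> R) (A : X -> Prop) (u : nat -> X) l N :
  is_metric d -> is_closed d A -> (forall n, (n >= N)%nat -> A (u n)) ->
  seq_converges d u l -> A l.
Proof.
  intros [_ [_ [Hsym _]]] Hc Hu Hcv. apply NNPP. intro Hl.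
  destruct (Hc l Hl) as [eps [Heps Hb]].
  destruct (Hcv eps Heps) as [N' HN'].
  apply (Hb (u (Nat.max N N'))).
  - rewrite Hsym. apply HN'. lia.
  - apply Hu. lia.
Qed.

Lemma roof_mono {X} (C : nat -> nat) (B : nat -> nat -> X -> Prop) :
  (forall n, subset (roof C B (S n)) (roof C B n)) ->
  forall n m y, (n <= m)%nat -> roof C B m y -> roof C B n y.
Proof.
  intros Hs n m y Hnm. induction Hnm; auto. intro Hr. apply IHHnm. apply Hs. exact Hr.
Qed.

Lemma phi_ge (phi : nat -> nat) : (forall n, (phi n < phi (S n))%nat) -> forall n, (n <= phi n)%nat.
Proof. intros H n. induction n; [lia|]. specialize (H n). lia. Qed.

Lemma roof_shrink {X} (d : X -> X -> R) (T : X -> X) C h (B : nat -> nat -> X -> Prop) x0 :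
  cantor_space d -> CKR_sequence d T C h B ->
  (forall y, (forall n, roof C B n y) <-> y = x0) ->
  forall delta, delta > 0 -> exists N, forall n y, (n >= N)%nat -> roof C B n y -> d x0 y < delta.
Proof.
  intros [Hm [_ [Hcomp _]]] [Hp [_ [Hs _]]] Hx0 delta Hdelta.
  apply NNPP. intro Hno.
  assert (Hex : forall N, exists y, roof C B N y /\ d x0 y >= delta).
  { intro N. apply NNPP. intro H. apply Hno. exists N. intros n y Hn Hr.
    apply Rnot_le_lt. intro Hle. apply H. exists y. split; [|lra].
    apply (roof_mono C B Hs N n y Hn Hr). }
  set (u := fun N => proj1_sig (constructive_indefinite_description _ (Hex N))).
  assert (Hu : forall N, roof C B N (u N) /\ d x0 (u N) >= delta).
  { intro N. exact (proj2_sig (constructive_indefinite_description _ (Hex N))). }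
  destruct (Hcomp u) as [phi [l [Hphi Hcv]]].
  assert (Hl : forall m, roof C B m l).
  { intro m. apply (closed_limit d _ (fun n => u (phi n)) l m Hm); auto.
    - apply union_closed. intros k Hk. destruct (Hp m) as [Hc _]. apply (Hc k Hk).
    - intros n Hn. apply (roof_mono C B Hs m (phi n)). pose proof (phi_ge phi Hphi n). lia.
      apply Hu. }
  apply Hx0 in Hl. subst l.
  destruct (Hcv delta Hdelta) as [N HN]. specialize (HN N (le_n N)).
  destruct Hm as [_ [_ [Hsym _]]]. rewrite Hsym in HN.
  destruct (Hu (phi N)). lra.
Qed.

Lemma iter_cancel {X} (T Sv : X -> X) m x : (forall x, T (Sv x) = x) ->
  Nat.iter m T (Nat.iter m Sv x) = x.
Proof.
  intro H. induction m; [reflexivity|]. change (Nat.iter (Datatypes.S m) Sv x) with (Sv (Nat.iter m Sv x)). rewrite iter_S_r, H. exact IHm.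
Qed.

Lemma roof_back {X} (d : X -> X -> R) (T Sv : X -> X) C h (B : nat -> nat -> X -> Prop) n k x :
  CKR_partition d T C h B n -> (forall x, T (Sv x) = x) ->
  (1 <= k <= C n)%nat -> B n k x -> roof C B n (Nat.iter (h n k) Sv x).
Proof.
  intros Hp HTS Hk Hb.
  pose proof Hp as [Hc [_ Hu]].
  destruct (Hc k Hk) as [_ [_ Hh]].
  set (w := Nat.iter (h n k) Sv x).
  destruct (rt_spec d T C h B n w Hp) as [k' [Hv Ha]].
  set (j := rt T C h B n w) in *.
  destruct (Nat.eq_dec j 0) as [E|E].
  - exists k'. split; [apply Hv|]. unfold atom, preim_iter in Ha. rewrite E in Ha. exact Ha.
  - exfalso.
    assert (Hw : T w = Nat.iter (h n k - 1) Sv x).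
    { unfold w. destruct (h n k) as [|hk]; [lia|]. simpl. rewrite Nat.sub_0_r. apply HTS. }
    assert (A1 : atom T B n k' (j - 1) (T w)).
    { unfold atom, preim_iter in *. rewrite <- iter_S_r. replace (S (j-1)) with j by lia. exact Ha. }
    assert (A2 : atom T B n k (h n k - 1) (T w)).
    { rewrite Hw. unfold atom, preim_iter. rewrite iter_cancel; auto. }
    destruct (Hu (T w) k' (j-1)%nat k (h n k - 1)%nat) as [E1 E2]; auto.
    + destruct Hv; split; auto; lia.
    + split; auto; lia.
    + subst k'. destruct Hv. lia.
Qed.

Lemma f_iter {X} (T : X -> X) (f : X -> Cx) lam m x :
  (forall x, f (T x) = Cx_mul lam (f x)) -> f (Nat.iter m T x) = Cx_mul (Cx_pow lam m) (f x).
Proof.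
  intro H. induction m; simpl.
  - apply Cx_ext; simpl; ring.
  - rewrite H, IHm, Cx_mul_assoc. reflexivity.
Qed.

Lemma dist_sym a b : Cx_dist a b = Cx_dist b a.
Proof. unfold Cx_dist. apply Cx_norm_sub_sym. Qed.

Lemma f_nonzero {X} (d : X -> X -> R) (T : X -> X) (f : X -> Cx) lam :
  Cx_norm lam = 1 -> minimal d T -> continuous_map d Cx_dist f ->
  (exists x, f x <> Cx0) -> (forall x, f (T x) = Cx_mul lam (f x)) ->
  forall x0, f x0 <> Cx0.
Proof.
  intros Hl Hmin Hc [x1 Hx1] Hf x0 H0. apply Hx1.
  assert (Horb : forall y, in_orbit T x0 y -> f y = Cx0).
  { intros y [m [->|E]].
    - rewrite (f_iter T f lam), H0 by auto. apply Cx_ext; simpl; ring.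
    - rewrite E, (f_iter T f lam) in H0 by auto. apply Cx_norm_0.
      assert (Hn := f_equal Cx_norm H0). rewrite Cx_norm_mul, Cx_norm_pow, Cx_norm_Cx0 in Hn by auto.
      lra. }
  apply Cx_norm_0. apply Rle_antisym; [|apply Cx_norm_pos].
  apply Rnot_lt_le. intro Hpos.
  destruct (Hc x1 (Cx_norm (f x1)) Hpos) as [delta [Hd Hy]].
  destruct (Hmin x0 x1 delta Hd) as [y [Hoy Hdy]].
  specialize (Hy y Hdy). rewrite (Horb y Hoy) in Hy. unfold Cx_dist in Hy.
  replace (Cx_sub (f x1) Cx0) with (f x1) in Hy by (apply Cx_ext; simpl; ring). lra.
Qed.

Lemma part1 {X} (d : X -> X -> R) (T : X -> X) C h (B : nat -> nat -> X -> Prop) lam :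
  minimal_cantor_system d T -> CKR_sequence d T C h B -> Cx_norm lam = 1 ->
  continuous_eigenvalue d T lam ->
  forall eps, eps > 0 -> exists N : nat, forall n : nat, (n >= N)%nat ->
    forall k : nat, (1 <= k <= C n)%nat ->
      Cx_norm (Cx_sub (Cx_pow lam (h n k)) Cx1) < eps.
Proof.
  intros [Hcant [[HTc [Sv [_ [_ HTS]]]] Hmin]] Hseq Hl [f [Hfc [Hne Hf]]] eps Heps.
  pose proof Hseq as [Hp [_ [_ [_ [[x0 Hx0] _]]]]].
  assert (Hf0 : f x0 <> Cx0) by (apply (f_nonzero d T f lam); auto).
  set (c := Cx_norm (f x0)).
  assert (Hc : c > 0).
  { pose proof (Cx_norm_pos (f x0)). destruct (Req_dec c 0) as [E|E].
    - exfalso. apply Hf0. apply Cx_norm_0. exact E.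
    - unfold c in *. lra. }
  set (m := Rmin eps 1).
  assert (Hm1 : m <= 1) by apply Rmin_r. assert (Hm2 : m <= eps) by apply Rmin_l.
  assert (Hm0 : m > 0) by (apply Rmin_pos; lra).
  set (e := c * m / 4).
  assert (He : e > 0) by (unfold e; nra).
  destruct (Hfc x0 e He) as [delta [Hd Hdl]].
  destruct (roof_shrink d T C h B x0 Hcant Hseq Hx0 delta Hd) as [N HN].
  exists N. intros n Hn k Hk.
  destruct (Hp n) as [Hcn _]. destruct (Hcn k Hk) as [_ [[x Hx] _]].
  set (y := Nat.iter (h n k) Sv x).
  assert (Hry : roof C B n y) by (apply (roof_back d T Sv C h B n k x); auto).
  assert (Hrx : roof C B n x) by (exists k; auto).
  assert (D1 : Cx_dist (f x0) (f x) < e) by (apply Hdl; apply (HN n); auto).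
  assert (D2 : Cx_dist (f x0) (f y) < e) by (apply Hdl; apply (HN n); auto).
  assert (Hxy : f x = Cx_mul (Cx_pow lam (h n k)) (f y)).
  { unfold y. rewrite <- (f_iter T f lam) by auto. rewrite iter_cancel; auto. }
  assert (Hkey : Cx_norm (Cx_sub (Cx_pow lam (h n k)) Cx1) * Cx_norm (f y) < 2 * e).
  { rewrite <- Cx_norm_mul.
    replace (Cx_mul (Cx_sub (Cx_pow lam (h n k)) Cx1) (f y)) with (Cx_sub (f x) (f y))
      by (rewrite Hxy; apply Cx_ext; simpl; ring).
    pose proof (Cx_dist_tri (f x) (f x0) (f y)). rewrite dist_sym in D1.
    unfold Cx_dist in *. lra. }
  assert (Hfy : c - e <= Cx_norm (f y)).
  { unfold c. replace (f x0) with (Cx_add (Cx_sub (f x0) (f y)) (f y)) by (apply Cx_ext; simpl; ring).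
    pose proof (Cx_norm_tri (Cx_sub (f x0) (f y)) (f y)). unfold Cx_dist in D2.
    pose proof (Cx_norm_tri (Cx_sub (f x0) (f y)) (f y)). 
    replace (Cx_add (Cx_sub (f x0) (f y)) (f y)) with (f x0) in * by (apply Cx_ext; simpl; ring).
    lra. }
  pose proof (Cx_norm_pos (Cx_sub (Cx_pow lam (h n k)) Cx1)) as Hpos.
  set (D := Cx_norm (Cx_sub (Cx_pow lam (h n k)) Cx1)) in *.
  assert (Hce : c - e >= 3 * c / 4) by (unfold e; nra).
  assert (D * (c - e) < 2 * e) by nra.
  unfold e in *. nra.
Qed.

Lemma C_pos {X} (d : X -> X -> R) (T : X -> X) C h (B : nat -> nat -> X -> Prop) n :
  (exists x : X, True) -> CKR_partition d T C h B n -> (1 <= C n)%nat.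
Proof.
  intros [x _] [_ [Hcov _]]. destruct (Hcov x) as [k [j [[Hk _] _]]]. lia.
Qed.

Lemma norm_sq lam : Cx_norm lam = 1 -> Cre lam * Cre lam + Cim lam * Cim lam = 1.
Proof.
  unfold Cx_norm. intro H.
  assert (Hp : 0 <= Cre lam * Cre lam + Cim lam * Cim lam) by nra.
  pose proof (sqrt_sqrt _ Hp). rewrite H in H0. lra.
Qed.

Lemma rt_shift {X} (d : X -> X -> R) (T : X -> X) C h (B : nat -> nat -> X -> Prop) n x :
  CKR_partition d T C h B n -> ~ roof C B n x ->
  rt T C h B n x = S (rt T C h B n (T x)).
Proof.
  intros Hp Hx. apply (rt_hit d); auto.
  - rewrite iter_S_r. apply (rt_roof d); auto.
  - intros i Hi. destruct i as [|i']; [exact Hx|]. rewrite iter_S_r.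
    apply (rt_before d T C h B); auto. lia.
Qed.

Lemma fn_shift {X} (d : X -> X -> R) (T : X -> X) C h (B : nat -> nat -> X -> Prop) n lam x :
  Cx_norm lam = 1 -> CKR_partition d T C h B n -> ~ roof C B n x ->
  fn T C h B lam n (T x) = Cx_mul lam (fn T C h B lam n x).
Proof.
  intros Hl Hp Hx. unfold fn. rewrite (rt_shift d T C h B n x Hp Hx). simpl.
  rewrite Cx_mul_assoc.
  replace (Cx_mul lam (Cx_conj lam)) with Cx1.
  - apply Cx_ext; simpl; ring.
  - pose proof (norm_sq lam Hl). apply Cx_ext; simpl; lra.
Qed.

Lemma const_cv c : Un_cv (fun _ => c) c.
Proof. intros eps Heps. exists 0%nat. intros. unfold Rdist. rewrite Rminus_diag, Rabs_R0. lra. Qed.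

Lemma part2 {X} (d : X -> X -> R) (T : X -> X) C h (B : nat -> nat -> X -> Prop) lam :
  minimal_cantor_system d T -> CKR_sequence d T C h B -> Cx_norm lam = 1 ->
  (exists l : R, Un_cv (fun M : nat => sum_f_R0 (fun i => series_term C h lam (S i)) M) l) ->
  continuous_eigenvalue d T lam.
Proof.
  intros [Hcant [[HTc _] Hmin]] Hseq Hl Hsum.
  pose proof Hseq as [Hp [_ [Hs [_ [[x0 Hx0] _]]]]].
  pose proof Hcant as [Hmet [Hinh [_ [_ Hnoiso]]]].
  set (g := fun i x => fn T C h B lam (S i) x).
  assert (Hb : forall i x, Cx_norm (Cx_sub (g (S i) x) (g i x)) <= series_term C h lam (S i)).
  { intros i x. unfold g. apply (diff_bound d); auto. apply (C_pos d T C h B); auto. }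
  destruct (unif_limit g (unif_cauchy g _ Hb Hsum)) as [f [Hpt Hunif]].
  assert (Hgn : forall i x, Cx_norm (g i x) = 1).
  { intros i x. unfold g, fn. apply Cx_norm_pow. rewrite Cx_norm_conj. auto. }
  assert (Hfc : continuous_map d Cx_dist f).
  { apply (limit_continuous d g f); auto.
    intros n x. destruct (rt_loc_const d T C h B (S n) (Hp (S n)) HTc x) as [delta [Hd Hy]].
    exists delta. split; auto. intros y Hdy. unfold g, fn. rewrite (Hy y Hdy). reflexivity. }
  assert (Hfne : forall x, f x <> Cx0).
  { intros x Hx. destruct (Hunif (1/4)) as [N HN]; [lra|].
    destruct (HN N x (le_n N)) as [H1 H2]. rewrite Hx in H1, H2. simpl in H1, H2.
    rewrite Rminus_0_r in H1, H2.
    pose proof (Cx_norm_le_comp (g N x) (1/4) H1 H2). rewrite Hgn in H. lra. }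
  assert (Heq1 : forall x, x <> x0 -> f (T x) = Cx_mul lam (f x)).
  { intros x Hxx.
    assert (Hn0 : exists n0, ~ roof C B n0 x).
    { apply NNPP. intro H. apply Hxx. apply Hx0. intro n. apply NNPP. intro H'. apply H. eauto. }
    destruct Hn0 as [n0 Hn0].
    assert (Hev : forall i, (i >= n0)%nat -> g i (T x) = Cx_mul lam (g i x)).
    { intros i Hi. unfold g. apply (fn_shift d); auto.
      intro Hr. apply Hn0. apply (roof_mono C B Hs n0 (S i)); auto. }
    destruct (Hpt (T x)) as [A1 A2]. destruct (Hpt x) as [B1 B2].
    apply Cx_ext; simpl.
    - apply (lim_ev_eq _ (fun i => Cre lam * Cre (g i x) - Cim lam * Cim (g i x)) _ _ n0 A1).
      + apply CV_minus; apply CV_mult; auto; apply const_cv.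
      + intros i Hi. rewrite Hev by auto. reflexivity.
    - apply (lim_ev_eq _ (fun i => Cre lam * Cim (g i x) + Cim lam * Cre (g i x)) _ _ n0 A2).
      + apply CV_plus; apply CV_mult; auto; apply const_cv.
      + intros i Hi. rewrite Hev by auto. reflexivity. }
  exists f. split; auto. split.
  { destruct Hinh as [x _]. exists x. auto. }
  intro x. destruct (classic (x = x0)) as [->|Hxx]; [|auto].
  (* continuity argument at x0 *)
  apply Cx_ext; apply NNPP; intro Hneq.
  all: set (D := Cx_dist (f (T x0)) (Cx_mul lam (f x0))).
  all: assert (HD : D = 0).
  all: try (apply Rle_antisym; [|apply Cx_norm_pos]; apply Rnot_lt_le; intro Hpos;
    destruct (Hfc (T x0) (D/2)) as [d1 [Hd1 H1]]; [lra|];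
    destruct (HTc x0 d1 Hd1) as [d2 [Hd2 H2]];
    destruct (Hfc x0 (D/2)) as [d3 [Hd3 H3]]; [lra|];
    destruct (Hnoiso x0 (Rmin d2 d3)) as [y [Hy Hdy]]; [apply Rmin_pos; auto|];
    assert (E1 : Cx_dist (f (T x0)) (f (T y)) < D/2)
      by (apply H1; apply H2; eapply Rlt_le_trans; [exact Hdy|apply Rmin_l]);
    assert (E2 : Cx_dist (f x0) (f y) < D/2)
      by (apply H3; eapply Rlt_le_trans; [exact Hdy|apply Rmin_r]);
    rewrite (Heq1 y Hy) in E1;
    assert (E3 : Cx_dist (Cx_mul lam (f y)) (Cx_mul lam (f x0)) = Cx_dist (f x0) (f y))
      by (unfold Cx_dist; rewrite Cx_norm_sub_sym;
          replace (Cx_sub (Cx_mul lam (f x0)) (Cx_mul lam (f y))) with (Cx_mul lam (Cx_sub (f x0) (f y)))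
            by (apply Cx_ext; simpl; ring);
          rewrite Cx_norm_mul, Hl; ring);
    pose proof (Cx_dist_tri (f (T x0)) (Cx_mul lam (f y)) (Cx_mul lam (f x0)));
    unfold D in *; lra).
  all: apply Hneq; apply Cx_norm_0 in HD;
    pose proof (f_equal Cre HD); pose proof (f_equal Cim HD); simpl in *; lra.
Qed.

Theorem mainTheorem9 (X : Type) (d : X -> X -> R) (T : X -> X)
  (C : nat -> nat) (h : nat -> nat -> nat) (B : nat -> nat -> X -> Prop) (lam : Cx) :
  minimal_cantor_system d T ->
  CKR_sequence d T C h B ->
  Cx_norm lam = 1 ->
  (continuous_eigenvalue d T lam ->
     forall eps, eps > 0 -> exists N : nat, forall n : nat, (n >= N)%nat ->
       forall k : nat, (1 <= k <= C n)%nat ->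
         Cx_norm (Cx_sub (Cx_pow lam (h n k)) Cx1) < eps)
  /\
  ((exists l : R, Un_cv (fun M : nat => sum_f_R0 (fun i => series_term C h lam (S i)) M) l) ->
     continuous_eigenvalue d T lam).
Proof.
  intros H1 H2 H3. split.
  - apply (part1 d T C h B lam); auto.
  - apply (part2 d T C h B lam); auto.
Qed.
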